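(* There is an absolute constant $C$ such that for all integers $b\ge 0$ and $p\ge 1$, with $n=2^b$, there is an arithmetic circuit using at most $C\,p\binom{n}{\downarrow p}$ $\oplus$-gates that, for every commutative monoid $(S,\oplus,0)$ and every $f:\binom{[n]}{\downarrow p}\to S$, computes for every $y\in[n]$ the value $e(y)=\bigoplus_{X\in\binom{[n]}{\downarrow p},\ y\notin X} f(X)$. (In particular, taking $f(X)=0$ for $|X|<p$, this solves $(p,1)$-disjoint summation.)
   Context: $\binom{[n]}{\downarrow p}$ is the family of subsets of $[n]=\{1,\dots,n\}$ of size at most $p$, and $\binom{n}{\downarrow p}=\sum_{i=0}^{p}\binom{n}{i}$. An arithmetic circuit consists of input gates (one per $X$, evaluating to $f(X)$), constant gates evaluating to $0$, and binary $\oplus$-gates, with designated output gates (one per $y$); gate count refers to the number of $\oplus$-gates. *)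

(* Defs.v *)
From HB Require Import structures.
From mathcomp Require Import all_boot all_order all_algebra.
Set Implicit Arguments. Unset Strict Implicit. Unset Printing Implicit Defensive.
Import GRing.Theory.
Local Open Scope ring_scope.

Definition binom_down (n p : nat) : nat := (\sum_(i < p.+1) 'C(n, i))%N.

Definition in_family (n p : nat) (X : {set 'I_n}) : bool := (#|X| <= p)%N.

(* Gates of an arithmetic circuit whose inputs are indexed by subsets of 'I_n.
   Gates are stored in a list; GAdd i j refers to earlier gates i, j (by position). *)
Inductive gate (n : nat) : Type :=
| GIn of {set 'I_n}
| GZero
| GAdd of nat & nat.

Record circuit (n : nat) : Type := Circuit {
  gates : seq (gate n);
  outs  : 'I_n -> nat
}.

Definition is_add n (g : gate n) : bool := if g is GAdd _ _ then true else false.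

Definition gate_count n (c : circuit n) : nat := count (@is_add n) (gates c).

Definition gate_ok n p (k : nat) (g : gate n) : bool :=
  match g with
  | GIn X => in_family p X
  | GZero => true
  | GAdd i j => (i < k)%N && (j < k)%N
  end.

Definition circuit_wf n p (c : circuit n) : Prop :=
  (forall k, (k < size (gates c))%N -> gate_ok p k (nth (GZero n) (gates c) k))
  /\ (forall y, (outs c y < size (gates c))%N).

(* evaluation in a commutative monoid S (nmodType = commutative additive monoid) *)
Definition eval_step n (S : nmodType) (f : {set 'I_n} -> S) (acc : seq S) (g : gate n) : seq S :=
  rcons acc (match g with
             | GIn X => f X
             | GZero => 0
             | GAdd i j => nth 0 acc i + nth 0 acc j
             end).

Definition gate_values n (S : nmodType) (f : {set 'I_n} -> S) (c : circuit n) : seq S :=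
  foldl (eval_step f) [::] (gates c).

Definition output_value n (S : nmodType) (f : {set 'I_n} -> S) (c : circuit n) (y : 'I_n) : S :=
  nth 0 (gate_values f c) (outs c y).

(* Main.v *)
Require Import Defs.
From HB Require Import structures.
From mathcomp Require Import all_boot all_order all_algebra.
From mathcomp Require Import zify.
Import GRing.Theory.
Local Open Scope ring_scope.
Set Implicit Arguments. Unset Strict Implicit. Unset Printing Implicit Defensive.

Definition vals n (S : nmodType) (f : {set 'I_n} -> S) (gs : seq (gate n)) : seq S :=
  foldl (eval_step f) [::] gs.

Lemma size_foldl_step n (S : nmodType) (f : {set 'I_n} -> S) gs acc :
  size (foldl (eval_step f) acc gs) = (size acc + size gs)%N.
Proof.
elim: gs acc => [|g gs IH] acc /=; first by rewrite addn0.
by rewrite IH size_rcons addSnnS.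
Qed.

Lemma size_vals n (S : nmodType) (f : {set 'I_n} -> S) gs : size (vals f gs) = size gs.
Proof. by rewrite /vals size_foldl_step. Qed.

Lemma nth_foldl_step n (S : nmodType) (f : {set 'I_n} -> S) gs acc i :
  (i < size acc)%N -> nth 0 (foldl (eval_step f) acc gs) i = nth 0 acc i.
Proof.
elim: gs acc => [|g gs IH] acc //= Hi.
rewrite IH; last by rewrite size_rcons ltnS ltnW.
by rewrite /eval_step nth_rcons Hi.
Qed.

Lemma vals_cat n (S : nmodType) (f : {set 'I_n} -> S) gs gs' i :
  (i < size gs)%N -> nth 0 (vals f (gs ++ gs')) i = nth 0 (vals f gs) i.
Proof. by move=> Hi; rewrite /vals foldl_cat nth_foldl_step // -/(vals f gs) size_vals. Qed.

Lemma vals_rcons n (S : nmodType) (f : {set 'I_n} -> S) gs g :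
  vals f (rcons gs g) = rcons (vals f gs) (match g with
             | GIn X => f X
             | GZero => 0
             | GAdd i j => nth 0 (vals f gs) i + nth 0 (vals f gs) j
             end).
Proof. by rewrite /vals -cats1 foldl_cat. Qed.

Lemma vals_last n (S : nmodType) (f : {set 'I_n} -> S) gs g :
  nth 0 (vals f (rcons gs g)) (size gs) = (match g with
             | GIn X => f X
             | GZero => 0
             | GAdd i j => nth 0 (vals f gs) i + nth 0 (vals f gs) j
             end).
Proof. by rewrite vals_rcons nth_rcons size_vals ltnn eqxx. Qed.

Definition gs_ok n p (gs : seq (gate n)) : Prop :=
  forall k, (k < size gs)%N -> gate_ok p k (nth (GZero n) gs k).

Definition Ext n p (gs gs' : seq (gate n)) (c : nat) : Prop :=
  exists e, gs' = gs ++ e /\ (count (@is_add n) e <= c)%N /\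
    (gs_ok p gs -> gs_ok p gs').

Lemma Ext_refl n p (gs : seq (gate n)) c : Ext p gs gs c.
Proof. by exists [::]; rewrite cats0. Qed.

Lemma Ext_trans n p (gs1 gs2 gs3 : seq (gate n)) c1 c2 c :
  Ext p gs1 gs2 c1 -> Ext p gs2 gs3 c2 -> (c1 + c2 <= c)%N -> Ext p gs1 gs3 c.
Proof.
move=> [e1 [-> [H1 O1]]] [e2 [-> [H2 O2]]] Hc.
exists (e1 ++ e2); rewrite catA; split=> //; split; last by move=> /O1 /O2.
by rewrite count_cat; apply: leq_trans Hc; apply: leq_add.
Qed.

Lemma Ext_size n p (gs gs' : seq (gate n)) c : Ext p gs gs' c -> (size gs <= size gs')%N.
Proof. by move=> [e [-> _]]; rewrite size_cat leq_addr. Qed.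

Lemma Ext_vals n p (gs gs' : seq (gate n)) c (S : nmodType) (f : {set 'I_n} -> S) i :
  Ext p gs gs' c -> (i < size gs)%N -> nth 0 (vals f gs') i = nth 0 (vals f gs) i.
Proof. by move=> [e [-> _]]; apply: vals_cat. Qed.

Lemma gs_ok_rcons n p (gs : seq (gate n)) g :
  gs_ok p gs -> gate_ok p (size gs) g -> gs_ok p (rcons gs g).
Proof.
move=> Hok Hg k; rewrite size_rcons ltnS leq_eqVlt nth_rcons.
case/orP=> [/eqP ->|Hk]; first by rewrite ltnn eqxx.
by rewrite Hk; apply: Hok.
Qed.

Fixpoint chain n (K a : nat) (l : seq nat) : seq (gate n) :=
  if l is j :: l' then GAdd n a j :: chain n K.+1 K l' else [::].

Definition cpos (K a t : nat) : nat := if t is t'.+1 then (K + t')%N else a.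

Lemma count_chain n K a l : count (@is_add n) (chain n K a l) = size l.
Proof. by elim: l K a => [|j l IH] K a //=; rewrite IH. Qed.

Lemma size_chain n K a l : size (chain n K a l) = size l.
Proof. by elim: l K a => [|j l IH] K a //=; rewrite IH. Qed.

Lemma chain_rcons n (gs : seq (gate n)) a j l :
  gs ++ chain n (size gs) a (j :: l) =
  rcons gs (GAdd n a j) ++ chain n (size (rcons gs (GAdd n a j))) (size gs) l.
Proof. by rewrite /= cat_rcons size_rcons. Qed.

Lemma chain_ok n p (gs : seq (gate n)) a l :
  gs_ok p gs -> (a < size gs)%N -> all (fun j => j < size gs)%N l ->
  gs_ok p (gs ++ chain n (size gs) a l).
Proof.
elim: l gs a => [|j l IH] gs a Hok Ha Hl; first by rewrite cats0.
rewrite chain_rcons; move: Hl => /= /andP [Hj Hl].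
apply: IH; first by apply: gs_ok_rcons => //=; rewrite Ha Hj.
  by rewrite size_rcons.
by apply/allP=> x /(allP Hl) Hx; rewrite size_rcons ltnS ltnW.
Qed.

Lemma chain_vals n (S : nmodType) (f : {set 'I_n} -> S) (gs : seq (gate n)) a l t :
  (a < size gs)%N -> all (fun j => j < size gs)%N l -> (t <= size l)%N ->
  nth 0 (vals f (gs ++ chain n (size gs) a l)) (cpos (size gs) a t) =
  nth 0 (vals f gs) a + \sum_(j <- take t l) nth 0 (vals f gs) j.
Proof.
elim: l gs a t => [|j l IH] gs a t Ha Hl Ht.
  by move: Ht; rewrite leqn0 => /eqP ->; rewrite cats0 /= big_nil addr0.
case: t Ht => [|t] Ht; first by rewrite /= vals_cat // big_nil addr0.
rewrite chain_rcons; move: Hl => /= /andP [Hj Hl].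
have Hl' : all (fun x => x < size (rcons gs (GAdd n a j)))%N l.
  by apply/allP=> x /(allP Hl) Hx; rewrite size_rcons ltnS ltnW.
have -> : (size gs + t)%N = cpos (size (rcons gs (GAdd n a j))) (size gs) t.
  by case: t {Ht} => [|t] /=; rewrite ?addn0 // size_rcons addSnnS.
rewrite [cpos _ _ _]/= in IH *.
rewrite IH //; last by rewrite size_rcons.
rewrite vals_last big_cons -addrA; congr (_ + (_ + _)).
rewrite big_seq [RHS]big_seq; apply: eq_bigr => i /mem_take /(allP Hl) Hi.
by rewrite -cats1 vals_cat.
Qed.

Definition sumlist n (gs : seq (gate n)) (ls : seq nat) : seq (gate n) * nat :=
  match ls with
  | [::] => (rcons gs (GZero n), size gs)
  | a :: l => (gs ++ chain n (size gs) a l, cpos (size gs) a (size l))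
  end.

Lemma sumlist_spec n p (gs : seq (gate n)) ls :
  all (fun j => j < size gs)%N ls ->
  Ext p gs (sumlist gs ls).1 (size ls) /\
  ((sumlist gs ls).2 < size (sumlist gs ls).1)%N /\
  forall (S : nmodType) (f : {set 'I_n} -> S),
    nth 0 (vals f (sumlist gs ls).1) (sumlist gs ls).2 =
    \sum_(j <- ls) nth 0 (vals f gs) j.
Proof.
case: ls => [|a l] /=.
  move=> _; split; first by exists [:: GZero n]; rewrite cats1; split=> //;
    split=> // Hok; apply: gs_ok_rcons.
  by rewrite size_rcons ltnSn; split=> // S f; rewrite vals_last big_nil.
move=> /andP [Ha Hl]; split.
  exists (chain n (size gs) a l); split=> //; split.
    by rewrite count_chain leqnSn.
  by move=> Hok; apply: chain_ok.
split.
  rewrite size_cat size_chain; case: l {Hl} => [|x l] /=.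
    by rewrite addn0.
  by rewrite addnS ltnS leqnn.
move=> S f; rewrite chain_vals // take_size big_cons //.
Qed.

Fixpoint sumall n (T : eqType) (gs : seq (gate n)) (g : T -> nat) (lA : seq T)
  (mk : T -> seq nat) : seq (gate n) * (T -> nat) :=
  match lA with
  | [::] => (gs, g)
  | A :: rest =>
      let r := sumlist gs (mk A) in
      sumall r.1 (fun X => if X == A then r.2 else g X) rest mk
  end.

Lemma sumall_spec n p (T : eqType) (gs : seq (gate n)) (g : T -> nat) lA mk :
  uniq lA -> (forall A, A \in lA -> all (fun j => j < size gs)%N (mk A)) ->
  Ext p gs (sumall gs g lA mk).1 (\sum_(A <- lA) size (mk A))%N /\
  (forall X, X \notin lA -> (sumall gs g lA mk).2 X = g X) /\
  forall A, A \in lA ->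
    ((sumall gs g lA mk).2 A < size (sumall gs g lA mk).1)%N /\
    forall (S : nmodType) (f : {set 'I_n} -> S),
      nth 0 (vals f (sumall gs g lA mk).1) ((sumall gs g lA mk).2 A) =
      \sum_(j <- mk A) nth 0 (vals f gs) j.
Proof.
elim: lA gs g => [|A rest IH] gs g.
  by move=> _ _; split; [exact: Ext_refl|split].
move=> /= /andP [HA Hu] Hmk.
have HmkA := Hmk A (mem_head _ _).
have [E1 [Hr1 V1]] := sumlist_spec p HmkA.
set r := sumlist gs (mk A) in E1 Hr1 V1 *.
have Hsz := Ext_size E1.
have Hmk' : forall A', A' \in rest -> all (fun j => j < size r.1)%N (mk A').
  move=> A' HA'; apply/allP=> j Hj.
  by apply: leq_trans Hsz; apply: (allP (Hmk A' _)) => //; rewrite inE HA' orbT.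
have [E2 [O2 V2]] := IH r.1 (fun X => if X == A then r.2 else g X) Hu Hmk'.
split; first by apply: Ext_trans E1 E2 _; rewrite big_cons.
split.
  move=> X; rewrite inE negb_or => /andP [HXA HX].
  by rewrite O2 // (negbTE HXA).
move=> A'; rewrite inE => /orP [/eqP ->|HA'].
  rewrite O2 // eqxx; split; first by apply: leq_trans (Ext_size E2).
  by move=> S f; rewrite (Ext_vals f E2) // V1.
have [Hlt V] := V2 A' HA'; split=> // S f; rewrite V.
rewrite big_seq [RHS]big_seq; apply: eq_bigr => j Hj.
by rewrite (Ext_vals f E1) //; apply: (allP (Hmk A' _)) => //; rewrite inE HA' orbT.
Qed.

Lemma bool5 (xX l r a b : bool): (a -> l) -> (b -> r) -> (l -> r -> False) ->
  (xX && (l || r) = a || b) <-> ((xX && l = a) /\ (xX && r = b)).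
Proof.
case: xX; case: l; case: r; case: a; case: b => //= Ha Hb Hd;
 (try by case: (Hd isT isT)); (try by have := Ha isT); (try by have := Hb isT);
 split; by [case | move=> [] ].
Qed.

Lemma setI_split n (DL DR A B X : {set 'I_n}) :
  (forall x, x \in DL -> x \in DR -> False) -> A \subset DL -> B \subset DR ->
  (X :&: (DL :|: DR) == A :|: B) = (X :&: DL == A) && (X :&: DR == B).
Proof.
move=> Hd sA sB; apply/idP/idP.
  move/eqP/setP => H; apply/andP; split; apply/eqP/setP => x; have := H x;
  rewrite !inE => Hx.
    exact: (proj1 (proj1 (bool5 _ (subsetP sA x) (subsetP sB x) (Hd x)) Hx)).
  exact: (proj2 (proj1 (bool5 _ (subsetP sA x) (subsetP sB x) (Hd x)) Hx)).
move=> /andP [/eqP/setP H1 /eqP/setP H2]; apply/eqP/setP => x.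
have := H1 x; have := H2 x; rewrite !inE => h2 h1.
by apply: (proj2 (bool5 _ (subsetP sA x) (subsetP sB x) (Hd x))).
Qed.

Definition PB n p (DR A : {set 'I_n}) : {set {set 'I_n}} :=
  [set B : {set 'I_n} | (B \subset DR) && (#|A :|: B| <= p)%N].
Definition SS n p (D : {set 'I_n}) : {set {set 'I_n}} :=
  [set A : {set 'I_n} | (A \subset D) && (#|A| <= p)%N].

Lemma split_sum n (S : nmodType) (f : {set 'I_n} -> S) p (DL DR A : {set 'I_n}) :
  (forall x, x \in DL -> x \in DR -> False) -> A \subset DL ->
  \sum_(B in PB p DR A) \sum_(X | in_family p X && (X :&: (DL :|: DR) == A :|: B)) f X
  = \sum_(X | in_family p X && (X :&: DL == A)) f X.
Proof.
move=> Hd sA; symmetry.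
rewrite (partition_big (fun X => X :&: DR) (fun B => B \in PB p DR A)).
  apply: eq_bigr => B; rewrite inE => /andP [sB _].
  by apply: eq_bigl => X; rewrite setI_split // andbA.
move=> X /andP [HX /eqP HXA]; rewrite inE subsetIr /=.
rewrite -HXA -setIUr; apply: leq_trans HX; apply: subset_leq_card; exact: subsetIl.
Qed.

Lemma count_split n p (DL DR : {set 'I_n}) :
  (forall x, x \in DL -> x \in DR -> False) ->
  (\sum_(A in SS p DL) #|PB p DR A| = #|SS p (DL :|: DR)|)%N.
Proof.
move=> Hd; rewrite -sum1_card.
rewrite [RHS](partition_big (fun X => X :&: DL) (fun A => A \in SS p DL)).
  apply: eq_bigr => A; rewrite inE => /andP [sA _].
  rewrite -sum1_card [RHS](reindex_onto (fun B => A :|: B) (fun X => X :&: DR)).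
    apply: eq_bigl => B; rewrite !inE; apply/idP/idP.
      move=> /andP [sB HB].
      have sU : A :|: B \subset DL :|: DR by apply: setUSS.
      rewrite sU HB /= -setI_split // (setIidPl sU) //.
    move=> /andP [/andP [/andP [_ HB] _] /eqP HBe].
    by rewrite HB andbT -HBe subsetIr.
  move=> X; rewrite inE => /andP [/andP [sX _] /eqP <-].
  by rewrite -setIUr (setIidPl sX).
move=> X; rewrite inE => /andP [sX HX]; rewrite inE subsetIr /=.
by apply: leq_trans HX; apply: subset_leq_card; exact: subsetIl.
Qed.

Lemma card_SS n p (D : {set 'I_n}) : #|SS p D| = binom_down #|D| p.
Proof.
rewrite /binom_down -[#|SS p D|]sum1_card.
rewrite [LHS](partition_big (fun X : {set 'I_n} => inord #|X| : 'I_p.+1) (fun _ => true)) //=.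
apply: eq_bigr => k _; rewrite -(cards_draws D k) -sum1_card.
apply: eq_bigl => X; rewrite !inE.
case: (X \subset D) => //=.
case: (leqP #|X| p) => HX /=.
  by rewrite -val_eqE /= inordK.
apply/esym/negbTE; apply: contraTneq HX => ->; rewrite -leqNgt -ltnS; exact: ltn_ord.
Qed.

Local Open Scope nat_scope.

Fixpoint cost (p j : nat) : nat :=
  if j is j'.+1 then 2 * binom_down (2 ^ j) p + 2 * cost p j' else 0.

Fixpoint ck (k j : nat) : nat :=
  if j is j'.+1 then 2 * 'C(2 ^ j, k) + 2 * ck k j' else 0.

Lemma cost_sum p j : cost p j = \sum_(k < p.+1) ck k j.
Proof.
elim: j => [|j IH] /=; first by rewrite big1.
by rewrite IH /binom_down !big_distrr -big_split.
Qed.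

Lemma ck0 j : ck 0 j + 2 <= 2 * 2 ^ j.
Proof. elim: j => [|j IH] //=; rewrite bin0 expnS; lia. Qed.

Lemma ck1 j : ck 1 j <= 2 * j * 2 ^ j.
Proof. elim: j => [|j IH] //=; rewrite bin1 expnS; nia. Qed.

Lemma ffact_double m k : 2 ^ k * m ^_ k <= (2 * m) ^_ k.
Proof.
elim: k => [|k IH]; first by rewrite !ffactn0.
rewrite !ffactnSr expnS.
apply: leq_trans (_ : 2 ^ k * m ^_ k * (2 * (m - k)) <= _).
  lia.
by apply: leq_mul => //; lia.
Qed.

Lemma bin_double m k : 4 * 'C(m, k.+2) <= 'C(2 * m, k.+2).
Proof.
rewrite -(leq_pmul2r (fact_gt0 k.+2)) -mulnA !bin_ffact.
apply: leq_trans (ffact_double m k.+2); apply: leq_mul => //.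
by rewrite !expnS mulnA leq_pmulr // expn_gt0.
Qed.

Lemma ckk k j : ck k.+2 j <= 4 * 'C(2 ^ j, k.+2).
Proof.
elim: j => [|j IH] //=.
have := bin_double (2 ^ j) k; rewrite -expnS; lia.
Qed.

Lemma cost_bound p j : 2 <= p -> cost p j <= 8 * binom_down (2 ^ j) p.
Proof.
case: p => [|[|p]] // _.
rewrite cost_sum /binom_down !big_ord_recl /=.
have HT : \sum_(i < p) ck (bump 0 (bump 0 (bump 0 i))) j <=
          4 * \sum_(i < p) 'C(2 ^ j, bump 0 (bump 0 (bump 0 i))).
  rewrite big_distrr; apply: leq_sum => i _; exact: ckk.
have Hc2 := ckk 0 j.
have H2 : 'C(2 ^ j, 2) * 2 = 2 ^ j * (2 ^ j - 1).
  by have := bin_ffact (2 ^ j) 2; rewrite ffactnSr ffactn1.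
have Hj : j < 2 ^ j by apply: ltn_expl.
have Hjm : j * 2 ^ j <= 2 * 'C(2 ^ j, 2) by nia.
have := ck0 j; have := ck1 j; move: HT Hc2; rewrite bin0 bin1 /bump /= !add1n; lia.
Qed.

Fixpoint solve n p (j : nat) (s : seq 'I_n) (G : {set 'I_n} -> nat) (gs : seq (gate n))
  : seq (gate n) * ('I_n -> nat) :=
  match j with
  | 0 => (gs, fun _ => G set0)
  | j'.+1 =>
    let L := take (2 ^ j') s in
    let R := drop (2 ^ j') s in
    let DL := [set x in L] in
    let DR := [set x in R] in
    let r1 := sumall gs G (enum (SS p DL))
                (fun A => [seq G (A :|: B) | B <- enum (PB p DR A)]) in
    let r2 := sumall r1.1 G (enum (SS p DR))
                (fun A => [seq G (A :|: B) | B <- enum (PB p DL A)]) in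
    let r3 := solve p j' L r1.2 r2.1 in
    let r4 := solve p j' R r2.2 r3.1 in
    (r4.1, fun y => if y \in L then r3.2 y else r4.2 y)
  end.

Local Open Scope ring_scope.

Definition Ginv n p (D : {set 'I_n}) (G : {set 'I_n} -> nat) (gs : seq (gate n)) :=
  forall A, A \in SS p D -> (G A < size gs)%N /\
    forall (S : nmodType) (f : {set 'I_n} -> S),
      nth 0 (vals f gs) (G A) = \sum_(X | in_family p X && (X :&: D == A)) f X.

Lemma Ginv_ext n p D G (gs gs' : seq (gate n)) c :
  Ginv p D G gs -> Ext p gs gs' c -> Ginv p D G gs'.
Proof.
move=> HG E A HA; have [Hlt V] := HG A HA; split.
  exact: leq_trans Hlt (Ext_size E).
by move=> S f; rewrite (Ext_vals f E).
Qed.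

Lemma half_spec n p (DL DR : {set 'I_n}) G (gs : seq (gate n)) :
  (forall x, x \in DL -> x \in DR -> False) ->
  Ginv p (DL :|: DR) G gs ->
  let r := sumall gs G (enum (SS p DL))
                (fun A => [seq G (A :|: B) | B <- enum (PB p DR A)]) in
  Ext p gs r.1 (binom_down #|DL :|: DR| p) /\ Ginv p DL r.2 r.1.
Proof.
move=> Hd HG r.
have Hmk : forall A, A \in enum (SS p DL) ->
    all (fun j => j < size gs)%N [seq G (A :|: B) | B <- enum (PB p DR A)].
  move=> A; rewrite mem_enum inE => /andP [sA _].
  apply/allP=> i /mapP [B]; rewrite mem_enum inE => /andP [sB HB] ->.
  by apply: (HG _ _).1; rewrite inE HB andbT; apply: setUSS.
have [E [_ V]] := sumall_spec p G (enum_uniq (mem (SS p DL))) Hmk.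
split.
  move: E; rewrite -/r big_enum /=; under eq_bigr do rewrite size_map -cardE.
  by rewrite count_split // card_SS.
move=> A HA; have HA' : A \in enum (SS p DL) by rewrite mem_enum.
have [Hlt VA] := V A HA'.
split=> // S f; rewrite VA big_map big_enum /=.
move: HA; rewrite inE => /andP [sA _].
rewrite -(split_sum f p Hd sA); apply: eq_bigr => B; rewrite inE => /andP [sB HB].
by rewrite (HG _ _).2 // inE HB andbT; apply: setUSS.
Qed.

Lemma solve_spec n p j : forall (s : seq 'I_n) G (gs : seq (gate n)),
  size s = (2 ^ j)%N -> uniq s -> Ginv p [set x in s] G gs ->
  Ext p gs (solve p j s G gs).1 (cost p j) /\
  forall y, y \in s -> ((solve p j s G gs).2 y < size (solve p j s G gs).1)%N /\
    forall (S : nmodType) (f : {set 'I_n} -> S),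
      nth 0 (vals f (solve p j s G gs).1) ((solve p j s G gs).2 y) =
      \sum_(X | in_family p X && (y \notin X)) f X.
Proof.
elim: j => [|j IH] s G gs Hs Hu HG.
  case: s Hs Hu HG => [|y [|? ?]] // _ _ HG; split; first exact: Ext_refl.
  move=> y'; rewrite inE => /eqP ->.
  have H0 : set0 \in SS p [set x in [:: y]] by rewrite inE sub0set cards0.
  have [Hlt V] := HG _ H0; split=> //= S f; rewrite V.
  apply: eq_bigl => X; congr (_ && _).
  have -> : [set x in [:: y]] = [set y] by apply/setP => x; rewrite !inE.
  by rewrite setI_eq0 disjoint_sym disjoints1.
rewrite /=.
set h := (2 ^ j)%N; set L := take h s; set R := drop h s.
have HsLR : s = L ++ R by rewrite cat_take_drop.
have HL : size L = h by rewrite size_takel // Hs expnS /h; lia.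
have HR : size R = h by rewrite size_drop Hs expnS /h; lia.
have := Hu; rewrite HsLR cat_uniq => /and3P [HuL HnLR HuR].
have Hd : forall x, x \in [set x in L] -> x \in [set x in R] -> False.
  move=> x; rewrite !inE => xL xR; move/negP: HnLR; apply; apply/hasP; by exists x.
have Hd' : forall x, x \in [set x in R] -> x \in [set x in L] -> False.
  by move=> x xR xL; apply: (Hd x).
have HD : [set x in s] = [set x in L] :|: [set x in R].
  by apply/setP => x; rewrite !inE HsLR mem_cat.
rewrite HD in HG.
have [E1 G1] := half_spec Hd HG.
have HG' := Ginv_ext HG E1; rewrite setUC in HG'.
have [E2 G2] := half_spec Hd' HG'.
set r1 := sumall gs G _ _ in E1 G1 HG' E2 G2 *.
set r2 := sumall r1.1 G _ _ in E2 G2 *.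
have [E3 V3] := IH L r1.2 r2.1 HL HuL (Ginv_ext G1 E2).
set r3 := solve p j L r1.2 r2.1 in E3 V3 *.
have [E4 V4] := IH R r2.2 r3.1 HR HuR (Ginv_ext G2 E3).
set r4 := solve p j R r2.2 r3.1 in E4 V4 *.
have Hc : #|[set x in L] :|: [set x in R]| = (2 ^ j.+1)%N.
  by rewrite -HD cardsE (card_uniqP Hu) Hs.
have Hc' : #|[set x in R] :|: [set x in L]| = (2 ^ j.+1)%N by rewrite setUC.
split.
  apply: Ext_trans E1 (Ext_trans E2 (Ext_trans E3 E4 (leqnn _)) (leqnn _)) _.
  rewrite Hc Hc'; lia.
move=> y; rewrite mem_cat; case: ifP => yL.
  have [Hlt V] := V3 y yL; split; first exact: leq_trans Hlt (Ext_size E4).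
  by move=> S f; rewrite (Ext_vals f E4) // V.
by move=> /= yR; apply: V4.
Qed.

Lemma foldl_inputs n (S : nmodType) (f : {set 'I_n} -> S) (l : seq {set 'I_n}) acc :
  foldl (eval_step f) acc (map (@GIn n) l) = acc ++ map f l.
Proof.
elim: l acc => [|X l IH] acc /=; first by rewrite cats0.
by rewrite IH cat_rcons.
Qed.

Lemma vals_inputs n (S : nmodType) (f : {set 'I_n} -> S) (l : seq {set 'I_n}) :
  vals f (map (@GIn n) l) = map f l.
Proof. by rewrite /vals foldl_inputs. Qed.

Lemma count_inputs n (l : seq {set 'I_n}) : count (@is_add n) (map (@GIn n) l) = 0%N.
Proof. by elim: l. Qed.

Lemma ok_inputs n p (l : seq {set 'I_n}) :
  (forall X, X \in l -> in_family p X) -> gs_ok p (map (@GIn n) l).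
Proof.
move=> Hl k; rewrite size_map => Hk.
by rewrite (nth_map set0) //=; apply: Hl; apply: mem_nth.
Qed.

Lemma setT_enum n : [set x in enum 'I_n] = [set: 'I_n].
Proof. by apply/setP => x; rewrite !inE mem_enum. Qed.

Lemma main_ge2 b p : (2 <= p)%N -> exists c : circuit (2 ^ b),
  circuit_wf p c /\
  (gate_count c <= 8 * p * binom_down (2 ^ b) p)%N /\
  forall (S : nmodType) (f : {set 'I_(2 ^ b)} -> S) (y : 'I_(2 ^ b)),
    output_value f c y = \sum_(X : {set 'I_(2 ^ b)} | in_family p X && (y \notin X)) f X.
Proof.
move=> Hp.
set n := (2 ^ b)%N.
set lF := enum (SS p [set: 'I_n]).
set gs0 := map (@GIn n) lF.
set G0 := fun A : {set 'I_n} => index A lF.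
have HG : Ginv p [set x in enum 'I_n] G0 gs0.
  rewrite setT_enum => A HA.
  have HAl : A \in lF by rewrite mem_enum.
  split; first by rewrite size_map index_mem.
  move=> S f; rewrite vals_inputs (nth_map set0) ?index_mem // nth_index //.
  have fA : in_family p A by move: HA; rewrite inE => /andP [].
  rewrite (eq_bigl (fun X => X == A)); first by rewrite big_pred1_eq.
  move=> X /=; rewrite setIT.
  by case: eqP => [->|]; rewrite ?fA ?andbF.
have Hok0 : gs_ok p gs0.
  by apply: ok_inputs => X; rewrite mem_enum inE => /andP [_ H].
have [[e [He [Hce Hoke]]] Vout] :=
  solve_spec (size_enum_ord n) (enum_uniq 'I_n) HG.
set r := solve p b (enum 'I_n) G0 gs0 in He Vout *.
exists (Circuit r.1 r.2); split.
  split; first by apply: Hoke.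
  by move=> y; apply: (Vout y (mem_enum _ _)).1.
split.
  rewrite /gate_count /= He count_cat count_inputs add0n.
  apply: leq_trans Hce _; apply: leq_trans (cost_bound b Hp) _.
  by rewrite /n; nia.
move=> S f y; exact: (Vout y (mem_enum _ _)).2.
Qed.

Lemma Ext_chain n p (gs : seq (gate n)) a l :
  (a < size gs)%N -> all (fun j => j < size gs)%N l ->
  Ext p gs (gs ++ chain n (size gs) a l) (size l).
Proof.
move=> Ha Hl; exists (chain n (size gs) a l); split=> //; split.
  by rewrite count_chain.
by move=> Hok; apply: chain_ok.
Qed.

Lemma Ext_zero n p (gs : seq (gate n)) : Ext p gs (rcons gs (GZero n)) 0.
Proof.
exists [:: GZero n]; rewrite cats1; split=> //; split=> // Hok.
exact: gs_ok_rcons.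
Qed.

Lemma cpos_lt K a t m : (a < K)%N -> (t <= m)%N -> (cpos K a t < K + m)%N.
Proof. case: t => [|t] /= Ha Ht; [exact: ltn_addr | by rewrite ltn_add2l]. Qed.

Lemma pick_set1 n (x : 'I_n) : [pick z in [set x]] = Some x.
Proof.
case: pickP => [z|H]; first by rewrite in_set1 => /eqP ->.
by have := H x; rewrite in_set1 eqxx.
Qed.

Lemma sum_fam1 n (S : nmodType) (f : {set 'I_n} -> S) (y : 'I_n) :
  \sum_(X | in_family 1 X && (y \notin X)) f X =
  f set0 + \sum_(x | x != y) f [set x].
Proof.
rewrite (bigD1 set0) /=; last by rewrite /in_family cards0 in_set0.
congr (_ + _).
rewrite (reindex_onto (fun x => [set x]) (fun X => odflt y [pick x in X])).
  apply: eq_bigl => j; rewrite /in_family cards1 in_set1 pick_set1 eqxx andbT /=.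
  rewrite eq_sym; case: (j != y) => //=.
  by apply/set0Pn; exists j; rewrite in_set1.
move=> X /andP [/andP [HX _] HX0]; rewrite /in_family in HX.
have /cards1P [x ->] : #|X| == 1%N.
  by rewrite eqn_leq HX /= lt0n cards_eq0.
by rewrite pick_set1.
Qed.

Lemma split_enum n (F : 'I_n -> nat -> nat) : True.
Proof. by []. Qed.


Lemma big_neq n (S : nmodType) (F : 'I_n -> S) (t : seq 'I_n) y :
  y \notin t -> \sum_(x <- t | x != y) F x = \sum_(x <- t) F x.
Proof.
move=> Hy; rewrite big_seq_cond [RHS]big_seq_cond; apply: eq_bigl => x.
case: (boolP (x \in t)) => //= xt; rewrite ?andbT.
by apply: contraNneq Hy => Exy; rewrite -Exy.
Qed.

Lemma sum_enum_split n (S : nmodType) (F : 'I_n -> S) (y : 'I_n) :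
  \sum_(x | x != y) F x =
  \sum_(x <- take y (enum 'I_n)) F x + \sum_(x <- drop y.+1 (enum 'I_n)) F x.
Proof.
have Hy : (y < size (enum 'I_n))%N by rewrite size_enum_ord.
have Hs : enum 'I_n = take y (enum 'I_n) ++ y :: drop y.+1 (enum 'I_n).
  by rewrite -{2}(nth_ord_enum y y) -drop_nth // cat_take_drop.
have Hu := enum_uniq 'I_n; rewrite {1}Hs cat_uniq /= in Hu.
move: Hu => /and3P [_ Hnt /andP [Hyd _]].
have -> : \sum_(x | x != y) F x = \sum_(x <- enum 'I_n | x != y) F x.
    by rewrite big_enum_cond; apply: eq_bigl => x.
rewrite {1}Hs big_cat big_cons eqxx /= !big_neq //.
have Hyt : y \notin take y (enum 'I_n) by move: Hnt; rewrite negb_or => /andP [].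
by move: Hnt; rewrite negb_or => /andP [].
Qed.

Lemma main_1 b : exists c : circuit (2 ^ b),
  circuit_wf 1 c /\
  (gate_count c <= 8 * 1 * binom_down (2 ^ b) 1)%N /\
  forall (S : nmodType) (f : {set 'I_(2 ^ b)} -> S) (y : 'I_(2 ^ b)),
    output_value f c y = \sum_(X : {set 'I_(2 ^ b)} | in_family 1 X && (y \notin X)) f X.
Proof.
set n := (2 ^ b)%N.
set lI := enum 'I_n.
have HlI : size lI = n by rewrite size_enum_ord.
set l0 := set0 :: [seq [set x] | x <- lI].
set gs0 := map (@GIn n) l0.
have Hs0 : size gs0 = n.+1 by rewrite size_map /= size_map HlI.
have Hok0 : gs_ok 1 gs0.
  apply: ok_inputs => X; rewrite inE => /orP [/eqP ->|/mapP [x _ ->]];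
    by rewrite /in_family ?cards0 ?cards1.
have V00 : forall (S : nmodType) (f : {set 'I_n} -> S), nth 0 (vals f gs0) 0 = f set0.
  by move=> S f; rewrite vals_inputs.
have V0 : forall (S : nmodType) (f : {set 'I_n} -> S) (x : 'I_n),
    nth 0 (vals f gs0) (x.+1) = f [set x].
  move=> S f x; rewrite vals_inputs (nth_map set0) /=; last by rewrite ?ltnS size_map HlI ltn_ord.
  by rewrite (nth_map x) ?HlI // nth_ord_enum.
set l1 := [seq (val x).+1 | x <- lI].
have Hl1 : all (fun j => j < size gs0)%N l1.
  by apply/allP => j /mapP [x _ ->]; rewrite Hs0 ltnS ltn_ord.
have Hsl1 : size l1 = n by rewrite size_map HlI.
set gs1 := gs0 ++ chain n (size gs0) 0 l1.
have E1 : Ext 1 gs0 gs1 (size l1) by apply: Ext_chain; rewrite // Hs0.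
set gs2 := rcons gs1 (GZero n).
have E2 : Ext 1 gs1 gs2 0 by apply: Ext_zero.
have Hs1 : size gs1 = (n.+1 + n)%N by rewrite size_cat size_chain Hs0 Hsl1.
have Hs2 : size gs2 = (n.+1 + n).+1 by rewrite size_rcons Hs1.
have Hl1' : all (fun j => j < size gs2)%N (rev l1).
  apply/allP => j; rewrite mem_rev => /(allP Hl1); rewrite Hs0 Hs2; lia.
set gs3 := gs2 ++ chain n (size gs2) (size gs1) (rev l1).
have E3 : Ext 1 gs2 gs3 (size (rev l1)).
  by apply: Ext_chain; rewrite // Hs2 Hs1.
set P := fun y : 'I_n => cpos (size gs0) 0 y.
set Q := fun y : 'I_n => cpos (size gs2) (size gs1) (n - y.+1).
have E13 : Ext 1 gs1 gs3 (size (rev l1)) by apply: Ext_trans E2 E3 _.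
have E02 : Ext 1 gs0 gs2 (size l1) by apply: Ext_trans E1 E2 _; rewrite ?addn0.
have VP : forall y : 'I_n, (P y < size gs3)%N /\
    forall (S : nmodType) (f : {set 'I_n} -> S),
      nth 0 (vals f gs3) (P y) = f set0 + \sum_(x <- take y lI) f [set x].
  move=> y; have Hy : (P y < size gs1)%N.
    by rewrite /P size_cat size_chain; apply: cpos_lt; rewrite ?Hs0 // Hsl1 ltnW.
  split; first exact: leq_trans Hy (Ext_size E13).
  have H0 : (0 < size gs0)%N by rewrite Hs0.
  have Hyl : (y <= size l1)%N by rewrite Hsl1 ltnW.
  move=> S f; rewrite (Ext_vals f E13) // /P chain_vals //.
  rewrite V00 /l1 -map_take big_map; congr (_ + _); apply: eq_bigr => x _; exact: V0.
have VQ : forall y : 'I_n, (Q y < size gs3)%N /\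
    forall (S : nmodType) (f : {set 'I_n} -> S),
      nth 0 (vals f gs3) (Q y) = \sum_(x <- drop y.+1 lI) f [set x].
  move=> y; split.
    have -> : size gs3 = (size gs2 + size (rev l1))%N by rewrite /gs3 size_cat size_chain.
    by apply: cpos_lt; rewrite ?Hs2 ?Hs1 // size_rev Hsl1 leq_subr.
  have Hz : (size gs1 < size gs2)%N by rewrite Hs2 Hs1.
  have Ht : (n - y.+1 <= size (rev l1))%N by rewrite size_rev Hsl1 leq_subr.
  move=> S f; rewrite /Q chain_vals //.
  rewrite /gs2 vals_last add0r take_rev Hsl1.
  have -> : (n - (n - y.+1))%N = y.+1 by have := ltn_ord y; lia.
  rewrite big_rev /l1 -map_drop big_map; apply: eq_bigr => x _.
  have Hx1 : ((val x).+1 < size gs0)%N by rewrite Hs0 ltnS ltn_ord.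
  rewrite -cats1 vals_cat; last by rewrite Hs1; have := ltn_ord x; lia.
  by rewrite (Ext_vals f E1) //; exact: V0.
have Hmk : forall y, y \in lI -> all (fun j => j < size gs3)%N [:: P y; Q y].
  by move=> y _; rewrite /= (VP y).1 (VQ y).1.
have [E4 [_ V4]] := sumall_spec 1 (fun _ : 'I_n => 0%N) (enum_uniq 'I_n) Hmk.
set r := sumall gs3 (fun _ => 0%N) lI (fun y => [:: P y; Q y]) in E4 V4.
have Hc4 : (\sum_(A <- lI) size [:: P A; Q A] = 2 * n)%N.
  by rewrite (eq_bigr (fun _ => 2%N)) // big_const_seq count_predT HlI iter_addn_0.
rewrite Hc4 in E4.
have E : Ext 1 gs0 r.1 (4 * n).
  apply: Ext_trans E02 (Ext_trans E3 E4 (leqnn _)) _.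
  by rewrite size_rev Hsl1; lia.
exists (Circuit r.1 r.2); split.
  split; first by case: E => e [_ [_ H]]; apply: H.
  by move=> y; apply: (V4 y (mem_enum _ _)).1.
split.
  case: E => e [He [Hce _]].
  rewrite /gate_count /= He count_cat count_inputs add0n.
  rewrite /binom_down big_ord_recl big_ord1 bin0 bin1 /=.
  by apply: leq_trans Hce _; lia.
move=> S f y.
have := (V4 y (mem_enum _ _)).2 S f.
rewrite big_cons big_cons big_nil addr0 (VP y).2 (VQ y).2 => H.
rewrite /output_value /gate_values /= -/(vals f r.1) H.
by rewrite sum_fam1 sum_enum_split addrA.
Qed.

Theorem mainTheorem8 :
  exists C : nat, forall b p : nat, (1 <= p)%N ->
    exists c : circuit (2 ^ b),
      circuit_wf p c /\
      (gate_count c <= C * p * binom_down (2 ^ b) p)%N /\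
      forall (S : nmodType) (f : {set 'I_(2 ^ b)} -> S) (y : 'I_(2 ^ b)),
        output_value f c y =
        \sum_(X : {set 'I_(2 ^ b)} | in_family p X && (y \notin X)) f X.
Proof.
exists 8%N => b p Hp.
case: p Hp => [|[|p]] // _; first exact: main_1.
exact: main_ge2.
Qed.
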